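(* Consider the following communication system. A $k$-bit binary information sequence is CRC-encoded with degree-$m$ generator polynomial $p(x)$ into an $n=k+m$ bit sequence divisible by $p(x)$, which (with $v$ zero termination bits) is encoded by a feedforward rate-$1/N$ convolutional code with $v$ memory elements and sent by QPSK over an AWGN channel with symbol SNR $\gamma_s=E_s/N_0$. The receiver uses serial list Viterbi decoding (S-LVA): codewords are output in order of increasing soft Viterbi metric relative to the received sequence, and decoding stops at the first codeword whose input sequence is divisible by $p(x)$. Let $N_{\mathrm{LVA}}$ be the index of the decoding trial at which the CRC check first passes, and for a list size $L$ let $P^{L}_{\mathrm{NACK}}=\Pr\{N_{\mathrm{LVA}}>L\}$ be the erasure probability (no codeword among the first $L$ passes the CRC). Then, as $\gamma_s\to\infty$, $P^{L}_{\mathrm{NACK}}\le \frac{1}{L}$ (i.e., $\limsup_{\gamma_s\to\infty}P^L_{\mathrm{NACK}}\le 1/L$).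
   Context: $\gamma_s$ is measured in dB; $\gamma_s\to\infty$ means the SNR tends to infinity. Probabilities are over the channel noise. *)

(* Defs.v *)
From HB Require Import structures.
From mathcomp Require Import all_boot all_order all_algebra.
From mathcomp Require Import all_classical all_reals all_analysis.
Set Implicit Arguments. Unset Strict Implicit. Unset Printing Implicit Defensive.
Import Order.TTheory GRing.Theory Num.Theory.
Local Open Scope classical_set_scope.
Local Open Scope ring_scope.

Definition bits_poly (n : nat) (u : 'I_n -> bool) : {poly 'F_2} :=
  \sum_(i < n) ((u i : nat)%:R *: 'X^i).

Definition crc_ok (p : {poly 'F_2}) (n : nat) (u : 'I_n -> bool) : bool :=
  p %| bits_poly u.

(* ---------- Feedforward rate-1/N convolutional encoder ----------
   g j i = tap of generator polynomial j on delay i (i = 0..v), i.e. a single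
   shift register with v memory elements. The n input bits are followed by v
   zero termination bits; output bit j at time t (t < n+v) is
   XOR_{i <= min(t,v)} g_j[i] * u'(t - i), with u' the zero-terminated input. *)
Definition term_input (n : nat) (u : 'I_n -> bool) (t : nat) : bool :=
  match insub t with Some i => u i | None => false end.

Definition conv_out (N n v : nat) (g : 'I_N -> 'I_v.+1 -> bool)
    (u : 'I_n -> bool) (t : 'I_(n + v)) (j : 'I_N) : bool :=
  \big[addb/false]_(i < v.+1 | (i <= t)%N) (g j i && term_input u (t - i)%N).

(* ---------- QPSK (Gray) over AWGN ----------
   Gray-mapped QPSK = BPSK on each of the I and Q components; with N0 = 1 and
   symbol energy Es = gamma (linear), each coded bit c is sent as the real
   amplitude sqrt(gamma/2) * (1 - 2c) and receives real Gaussian noise of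
   variance N0/2 = 1/2. *)
Definition bpsk {R : realType} (c : bool) : R := if c then -1 else 1.

Definition snr_lin {R : realType} (gamma_dB : R) : R := powR 10 (gamma_dB / 10).

Definition amp {R : realType} (gamma_dB : R) : R := Num.sqrt (snr_lin gamma_dB / 2).

Definition received {R : realType} (N n v : nat) (g : 'I_N -> 'I_v.+1 -> bool)
    (gamma_dB : R) (x : 'I_n -> bool) (w : 'I_(n + v) * 'I_N -> R)
    (t : 'I_(n + v)) (j : 'I_N) : R :=
  amp gamma_dB * bpsk (conv_out g x t j) + w (t, j).

Definition metric {R : realType} (N n v : nat) (g : 'I_N -> 'I_v.+1 -> bool)
    (gamma_dB : R) (r : 'I_(n + v) -> 'I_N -> R) (u : 'I_n -> bool) : R :=
  \sum_(t < n + v) \sum_(j < N) (r t j - amp gamma_dB * bpsk (conv_out g u t j)) ^+ 2.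

(* ---------- Serial list Viterbi decoding ----------
   Candidates (input sequences, i.e. trellis paths) are output in order of
   increasing metric; N_LVA is the index of the first one passing the CRC,
   i.e. 1 + the number of CRC-failing candidates listed before the best
   CRC-passing one. Ties (a probability-zero event) are broken pessimistically:
   a CRC-failing candidate with metric equal to the best CRC-passing metric
   is listed first. *)
Definition N_LVA {R : realType} (N n v : nat) (g : 'I_N -> 'I_v.+1 -> bool)
    (p : {poly 'F_2}) (gamma_dB : R) (r : 'I_(n + v) -> 'I_N -> R) : nat :=
  (#|[set u : {ffun 'I_n -> bool} | ~~ crc_ok p u &&
      [forall u' : {ffun 'I_n -> bool},
         crc_ok p u' ==> (metric g gamma_dB r u <= metric g gamma_dB r u')]]|).+1.

Definition mutually_independent {R : realType} d (T : measurableType d)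
    (P : probability T R) (I : finType) (X : I -> T -> R) : Prop :=
  forall (J : {set I}) (B : I -> set R), (forall i, measurable (B i)) ->
    P [set t | forall i, i \in J -> B i (X i t)] =
    (\prod_(i in J) P (X i @^-1` B i))%E.

(* Main.v *)
Require Import Defs.
From HB Require Import structures.
From mathcomp Require Import all_boot all_order all_algebra.
From mathcomp Require Import all_classical all_reals all_analysis.
From mathcomp Require Import lra zify.
Import Order.TTheory GRing.Theory Num.Theory.
Local Open Scope classical_set_scope.
Local Open Scope ring_scope.
Section M.
Context d (T : measurableType d).

Lemma mexists (X : eqType) (s : seq X) (G : X -> set T) :
  (forall x, measurable (G x)) -> measurable [set t | exists2 x, x \in s & G x t].
Proof.
move=> mG; elim: s => [|x s IH].
  have -> : [set t | exists2 x, x \in [::] & G x t] = set0.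
    by apply/seteqP; split => t //= [].
  exact: measurable0.
have -> : [set t | exists2 y, y \in x :: s & G y t] = G x `|` [set t | exists2 x, x \in s & G x t].
  apply/seteqP; split => t /=.
    by move=> [y]; rewrite in_cons => /orP[/eqP->|ys] Gy; [left|right; exists y].
  by case=> [Gx|[y ys Gy]]; [exists x; rewrite ?mem_head|exists y; rewrite // in_cons ys orbT].
exact: measurableU.
Qed.

Lemma mforall (X : eqType) (s : seq X) (G : X -> set T) :
  (forall x, measurable (G x)) -> measurable [set t | forall x, x \in s -> G x t].
Proof.
move=> mG; elim: s => [|x s IH].
  have -> : [set t | forall x, x \in [::] -> G x t] = setT.
    by apply/seteqP; split => t //=.
  exact: measurableT.
have -> : [set t | forall y, y \in x :: s -> G y t] = G x `&` [set t | forall x, x \in s -> G x t].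
  apply/seteqP; split => t /=.
    by move=> H; split; [apply: H; rewrite mem_head| move=> y ys; apply: H; rewrite in_cons ys orbT].
  by move=> [Gx H] y; rewrite in_cons => /orP[/eqP->|]//; apply: H.
exact: measurableI.
Qed.

Lemma mbool (I : finType) (b : I -> T -> bool) (Phi : {ffun I -> bool} -> bool) :
  (forall i, measurable [set t | b i t]) ->
  measurable [set t | Phi [ffun i => b i t]].
Proof.
move=> mb.
have -> : [set t | Phi [ffun i => b i t]] = [set t | exists2 f, f \in enum [set f | Phi f] &
   (fun f => [set t | forall i, i \in enum I -> b i t = f i]) f t].
  apply/seteqP; split => t /=.
    move=> Pt; exists [ffun i => b i t]; first by rewrite mem_enum inE.
    by move=> i _; rewrite ffunE.
  move=> [f]; rewrite mem_enum inE => Pf H.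
  suff -> : [ffun i => b i t] = f by [].
  by apply/ffunP => i; rewrite ffunE H // mem_enum.
apply: mexists => f; apply: mforall => i.
case fi: (f i).
  by apply: mb.
have -> : (fun t => b i t = false) = ~` [set t | b i t].
  by apply/seteqP; split => t /=; [move->|move/negP/negbTE].
exact: measurableC.
Qed.
End M.
Lemma small_tail {R : realType} {d} {T : measurableType d} (P : probability T R)
  {F : (set T)^nat} {e : R} : 0 < e ->
  (forall n, measurable (F n)) -> nonincreasing_seq F -> \bigcap_n F n = set0 ->
  exists n, (P (F n) <= e%:E)%E.
Proof.
move=> e0 mF niF capF.
have h := nonincreasing_cvg_mu (mu := P) _ mF _ niF.
rewrite capF measure0 in h.
have /h : (P (F 0%N) < +oo)%E.
  by apply: (le_lt_trans (probability_le1 P (mF 0%N))); rewrite ltry.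
move=> /(_ measurable0) c.
have : \forall n \near \oo, (P (F n) <= e%:E)%E.
  apply: (c [set y | (y <= e%:E)%E]). change (\forall y \near (0:R)%:E, (y <= e%:E)%E). rewrite nbhs_EFin.
  exact: nbhs0_ltW.
by case=> N _ /(_ N (leqnn N)) H; exists N.
Qed.

Lemma amp_big (R : realType) (M : R) : \forall gam \near +oo, M <= amp gam.
Proof.
rewrite /amp /snr_lin.
have l10 : 0 < ln (10:R) by apply: ln_gt0; rewrite ltr1n.
have := nbhs_pinfty_ge (num_real (20 * M ^+ 2 / ln (10:R))).
apply: filterS => gam Hg.
apply: (le_trans (ler_norm M)).
rewrite -sqrtr_sqr ler_sqrt; last first.
  by apply: divr_ge0 => //; apply: ltW; apply: powR_gt0.
rewrite /powR (negbTE (_ : (10:R) != 0)) //.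
have h2 := expR_ge1Dx (gam / 10 * ln (10:R)).
have h1 : 20 * M ^+ 2 <= gam * ln (10:R) by rewrite -ler_pdivrMr.

lra.
Qed.
Lemma term_inputE n (u : 'I_n -> bool) (i : 'I_n) : term_input u i = u i.
Proof. by rewrite /term_input valK. Qed.

Lemma conv_inj (N n v : nat) (g : 'I_N -> 'I_v.+1 -> bool) (u x : 'I_n -> bool) :
  (exists j i, g j i) -> (exists i, u i != x i) ->
  exists t j, conv_out g u t j != conv_out g x t j.
Proof.
move=> [j0 [i1 gi1]] ux.
have exi : exists i, (i < v.+1)%N && g j0 (inord i).
  by exists i1; rewrite ltn_ord inord_val gi1.
case: (ex_minnP exi) => i0 /andP[i0v gi0] mini0.
have exs : exists s, term_input u s != term_input x s.
  by case: ux => i uxi; exists i; rewrite !term_inputE.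
case: (ex_minnP exs) => s Ps mins.
have sn : (s < n)%N.
  rewrite ltnNge; apply/negP => ns; move: Ps.
  by rewrite /term_input insubF ?ltnNge ?ns.
have tlt : (s + i0 < n + v)%N by rewrite -addSn leq_add.
exists (Ordinal tlt), j0.
pose io := Ordinal i0v.
rewrite /conv_out (bigD1 io) /=; last by rewrite leq_addl.
rewrite [X in _ != X](bigD1 io) /=; last by rewrite leq_addl.
rewrite addnK.
have gio : g j0 io by rewrite /io; move: gi0; rewrite (_ : inord i0 = io) //; apply: val_inj; rewrite /= inordK.
rewrite gio /=.
rewrite (eq_bigr (fun i => g j0 i && term_input x (s + i0 - i))); last first.
  move=> i /andP[it ni].
  case: (ltngtP i i0) => [ii0|ii0|ii0].
  - have : g j0 i = false.
      apply/negbTE/negP => gi.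
      have := mini0 i; rewrite ltn_ord inord_val gi => /(_ isT).
      by rewrite leqNgt ii0.
    by move->.
  - have lt : (s + i0 - i < s)%N.
      by move: it ii0 => /= ; lia.
    case E: (term_input u (s + i0 - i) != term_input x (s + i0 - i)).
      by have := mins _ E; rewrite leqNgt lt.
    by move/negbT: E; rewrite negbK => /eqP ->.
  - by case/eqP: ni; apply: val_inj.
by move: Ps; case: (term_input u s); case: (term_input x s); case: (\big[addb/false]_(_ | _) _).
Qed.
Lemma ltr_sum1 (R : realDomainType) (I : finType) (F G : I -> R) (i0 : I) :
  (forall i, F i <= G i) -> F i0 < G i0 -> \sum_i F i < \sum_i G i.
Proof.
move=> FG FG0; rewrite (bigD1 i0) //= [X in _ < X](bigD1 i0) //=.
by apply: ltr_leD => //; apply: ler_sum => i _.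
Qed.

Lemma term_le (R : realType) (a w : R) (c c' : bool) : 0 < a -> `|w| < a ->
  (a * bpsk c + w - a * bpsk c) ^+ 2 <= (a * bpsk c + w - a * bpsk c') ^+ 2 /\
  (c != c' -> (a * bpsk c + w - a * bpsk c) ^+ 2 < (a * bpsk c + w - a * bpsk c') ^+ 2).
Proof.
move=> a0; rewrite ltr_norml => /andP[h1 h2].
by case: c; case: c'; rewrite /bpsk /=; split => // *; nra.
Qed.

Lemma metric_lt (R : realType) (N n v : nat) (g : 'I_N -> 'I_v.+1 -> bool) (gam : R)
  (x u : 'I_n -> bool) (w : 'I_(n + v) * 'I_N -> R) t0 j0 :
  conv_out g u t0 j0 != conv_out g x t0 j0 ->
  (forall ij, `|w ij| < amp gam) ->
  metric g gam (received g gam x w) x < metric g gam (received g gam x w) u.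
Proof.
move=> d0 wl.
have a0 : 0 < amp gam.
  by rewrite /amp sqrtr_gt0 divr_gt0 // powR_gt0.
rewrite /metric /received.
apply: (@ltr_sum1 _ _ _ _ t0) => [t|].
  apply: ler_sum => j _. exact: (term_le _ _ _ _ _ a0 (wl (t, j))).1.
apply: (@ltr_sum1 _ _ _ _ j0) => [j|].
  exact: (term_le _ _ _ _ _ a0 (wl (t0, j))).1.
by apply: (term_le _ _ _ _ _ a0 (wl (t0, j0))).2; rewrite eq_sym.
Qed.
Arguments conv_inj {N n v g u x}.
Arguments metric_lt {R N n v g gam x u w t0 j0}.

Lemma mexistsT d (T : measurableType d) (X : finType) (G : X -> set T) :
  (forall x, measurable (G x)) -> measurable [set t | exists x, G x t].
Proof.
move=> mG.
have -> : [set t | exists x, G x t] = [set t | exists2 x, x \in enum X & G x t].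
  by apply/seteqP; split => t /= [y]; [exists y; rewrite ?mem_enum|exists y].
exact: mexists.
Qed.

Lemma mboolfun d (T : measurableType d) (b : T -> bool) :
  measurable_fun setT b -> measurable [set t | b t].
Proof.
move=> mb; have := mb measurableT [set true] I; rewrite setTI.
by congr measurable; apply/seteqP; split => t /=.
Qed.

Theorem corollary1 (R : realType) (d : measure_display) (T : measurableType d)
    (P : probability T R) (k m N v L : nat) (p : {poly 'F_2})
    (g : 'I_N -> 'I_v.+1 -> bool) (x : 'I_(k + m) -> bool)
    (W : 'I_(k + m + v) * 'I_N -> {RV P >-> R}) :
  size p = m.+1 ->
  (0 < N)%N ->
  (exists j i, g j i) ->
  crc_ok p x ->
  mutually_independent P (fun ij t => W ij t) ->
  (forall ij (B : set R), measurable B ->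
     P (W ij @^-1` B) = normal_prob 0 (Num.sqrt (2^-1)) B) ->
  (0 < L)%N ->
  forall e : R, 0 < e ->
    \forall gam \near +oo%R,
      (P [set t | (L < N_LVA g p gam
                     (received g gam x (fun ij => W ij t)))%N]
       <= ((L%:R)^-1 + e)%:E)%E.
Proof.
move=> _ _ hg hx _ _ hL e e0.
pose E (nn : nat) := [set t | exists ij, nn%:R <= `|W ij t| ].
have mE : forall nn, measurable (E nn).
  move=> nn; apply: mexistsT => ij; apply: mboolfun.
  apply: measurable_realfun.measurable_fun_ler; first exact: measurable_cst.
  exact: measurableT_comp (@measurable_realfun.normr_measurable R _) (measurable_funPT (W ij)).
have niE : nonincreasing_seq E.
  move=> a b ab; apply/subsetPset => t [ij H]; exists ij.
  by apply: le_trans H; rewrite ler_nat.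
have capE : \bigcap_nn E nn = set0.
  apply/seteqP; split => t //= H.
  pose nn := (\sum_ij Num.bound `|W ij t|)%N.
  have [ij Hij] := H nn I.
  have := archi_boundP (normr_ge0 (W ij t)).
  have : (Num.bound `|W ij t| <= nn)%N.
    by rewrite /nn (bigD1 ij) //= leq_addr.
  rewrite -(ler_nat R) => h1 h2.
  by have := lt_le_trans h2 h1; rewrite ltNge Hij.
have [n0 Pn0] := small_tail P e0 mE niE capE.
have := @amp_big R n0%:R; apply: filterS => gam Hg.
set ev := [set t | _].
pose mt (u : 'I_(k + m) -> bool) t :=
  metric g gam (received g gam x (fun ij => W ij t)) u.
have mmt : forall u, measurable_fun setT (mt u).
  move=> u; rewrite /mt /metric /received.
  apply: measurable_sum => t'; apply: measurable_sum => j.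
  apply: measurable_realfun.measurable_funX; apply: measurable_realfun.measurable_funB; last exact: measurable_cst.
  apply: measurable_realfun.measurable_funD; first exact: measurable_cst.
  exact: measurable_funPT.
pose Phi (f : {ffun ({ffun 'I_(k + m) -> bool} * {ffun 'I_(k + m) -> bool}) -> bool}) :=
  (L < #|[set u : {ffun 'I_(k + m) -> bool} | ~~ crc_ok p u &&
      [forall u' : {ffun 'I_(k + m) -> bool}, crc_ok p u' ==> f (u, u')]]|.+1)%N.
have cE : forall t, N_LVA g p gam (received g gam x (fun ij => W ij t)) =
    (#|[set u : {ffun 'I_(k + m) -> bool} | ~~ crc_ok p u &&
      [forall u' : {ffun 'I_(k + m) -> bool}, crc_ok p u' ==>
        [ffun uu : {ffun 'I_(k + m) -> bool} * {ffun 'I_(k + m) -> bool} => mt uu.1 t <= mt uu.2 t] (u, u')]]|).+1.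
  move=> t; rewrite /N_LVA; congr (_.+1); congr (#|_|).
  apply/seteqP; split => u /= /andP[-> /forallP H]; apply/forallP => u'; have := H u';
  by rewrite ffunE.
have evE : ev = [set t : T | Phi [ffun uu : {ffun 'I_(k + m) -> bool} * {ffun 'I_(k + m) -> bool} => mt uu.1 t <= mt uu.2 t]].
  by rewrite /ev /Phi; apply/seteqP; split => t /=; rewrite cE.
have mev : measurable ev.
  rewrite evE; apply: mbool => uu; apply: mboolfun.
  exact: measurable_realfun.measurable_fun_ler.
have sub : ev `<=` E n0.
  move=> t; rewrite /ev /= /N_LVA ltnS => /(leq_trans hL).
  case/card_gt0P => u; rewrite in_setE /= => /andP[cu /forallP H].
  pose xf := [ffun i => x i].
  have xfx : (xf : 'I_(k + m) -> bool) = x by apply/funext => i; rewrite ffunE.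
  have := H xf; rewrite xfx hx /= => lemu.
  have ux : exists i, u i != x i.
    case: (boolP [exists i, u i != x i]) => [/existsP[i ?]|]; first by exists i.
    rewrite negb_exists => /forallP H'.
    have : (u : 'I_(k + m) -> bool) = x.
      by apply/funext => i; have := H' i; rewrite negbK => /eqP.
    by move=> ueq; move: cu; rewrite ueq hx.
  have [t0 [j0 dj]] := conv_inj hg ux.
  case: (boolP [forall ij, `|W ij t| < amp gam]) => [/forallP Hw|].
    have := metric_lt dj Hw.
    by rewrite ltNge lemu.
  rewrite negb_forall => /existsP[ij]; rewrite -leNgt => Hij.
  by exists ij; apply: le_trans Hij.
have h := @le_measure _ _ _ P ev (E n0).
rewrite !inE in h; have {}h := h mev (mE n0) sub.
apply: (le_trans h).
apply: (le_trans Pn0); rewrite lee_fin lerDr invr_ge0 //.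
Qed.
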